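(* Let $\rho\in V_0$ be non-integral. Let $\mathcal A\subseteq\mathrm{End}_{\mathbb C}\,\mathcal C(\rho+\Lambda_+)$ be the algebra generated by the multiplication operators $m_h$ ($h\in\mathcal P^W$) and $L$. For $X\in\mathrm{End}_{\mathbb C}\,\mathcal C(\rho+\Lambda_+)$ define $\widehat X$ by $\widehat X(h):=\widehat{X(\widehat h)}$. Then $X\mapsto\widehat X$ restricts to an involutory automorphism of $\mathcal A$; more precisely $\widehat{m_h}=D_h$ for all $h\in\mathcal P^W$ and $\widehat L=-L$.
   Context: Setting: $V$ is a finite-dimensional complex vector space, $W\subseteq GL(V)$ a finite reflection group, $\Lambda_+\subseteq V$ a finitely generated submonoid whose minimal set of generators $\Sigma^\vee$ is a basis of $V$, and $\ell:V\to\mathbb C$ a $W$-invariant linear form with $\ell(\Lambda_+)\subseteq\mathbb N$; these data satisfy the axioms of F. Knop, ''Construction of commuting difference operators for multiplicity free spaces'' (the combinatorial data attached to multiplicity free representations). Notation: $\Gamma^\vee=\mathbb Z\Lambda_+$, $\Gamma\subseteq V^\vee$ its dual lattice, $\Sigma\subseteq V^\vee$ the dual basis of $\Sigma^\vee$, $\Phi=\bigcup_{w\in W}w\Sigma$, $\Delta\subseteq\Gamma$ the root system of $W$ with roots primitive in $\Gamma$, $\Delta^+=\{\alpha\in\Delta:\alpha(\Sigma^\vee)\ge0\}$, $\Lambda_1=\{w\eta:w\in W,\eta\in\Sigma^\vee,\ell(\eta)=1\}$. $V_0$ is the set of $\rho\in V$ with $\omega_1(\rho)=\omega_2(\rho)$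 whenever $\omega_1,\omega_2\in\Sigma$, $\omega_1\in\pm W\omega_2$; for $\rho\in V_0$, $\omega\in\pm\Phi$, $k_\omega:=\omega_1(\rho)$ with $\omega_1\in(\pm W\omega)\cap\Sigma$. $\rho\in V_0$ is non-integral if $\alpha(\rho)\notin\mathbb Z$ for all $\alpha\in\Delta^+$. $\mathcal P$ = polynomial functions on $V$. Known: for such $\rho$ and $\lambda\in\Lambda_+$ there is a unique $p_\lambda\in\mathcal P^W$ with $\deg p_\lambda\le\ell(\lambda)$ and $p_\lambda(\rho+\mu)=\delta_{\lambda\mu}$ for all $\mu\in\Lambda_+$ with $\ell(\mu)\le\ell(\lambda)$; they form a basis of $\mathcal P^W$. $\mathcal C(\rho+\Lambda_+)$ is the space of complex functions on $\rho+\Lambda_+$ ($\mathcal P^W$ embeds by restriction), and for $h\in\mathcal C(\rho+\Lambda_+)$, $\widehat h(\rho+\mu):=\sum_{\tau\in\Lambda_+}(-1)^{\ell(\tau)}p_\tau(\rho+\mu)h(\rho+\tau)$ (finite sum). Difference operators: $[z\downarrow d]=z(z-1)\cdots(z-d+1)$ for $d>0$, $=1$ otherwise; for $\tau\in\Gamma^\vee$, $f_\tau(z)=\prod_{\omega\in\Phi}[\omega(z)-k_\omega\downarrow\omega(\tau)]\big/\prod_{\alpha\in\Delta}[\alpha(z)\downarrow\alpha(\tau)]$; $L$ acts on $\mathcal C(\rho+\Lambda_+)$ by $(Lh)(\rho+\lambda)=\sum_{\eta\in\Lambda_1}f_\eta(\rho+\lambda)h(\rho+\lambda-\eta)$, which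 is well defined since (known) $f_\eta(\rho+\lambda)=0$ whenever $\lambda\in\Lambda_+$, $\lambda-\eta\notin\Lambda_+$; on polynomials this is $L=\sum_{\eta\in\Lambda_1}f_\eta(z)T_\eta$ with $(T_\eta f)(z)=f(z-\eta)$. Known: $(\mathrm{ad}L)^n(m_h)=0$ for $n>\deg h$, and $D_h:=\sum_{n\ge0}\frac1{n!}(\mathrm{ad}L)^n(m_h)\in\mathcal A$ satisfies $D_h(p_\lambda)=h(\rho+\lambda)p_\lambda$. *)

(* Defs.v *)
From HB Require Import structures.
From mathcomp Require Import all_boot all_order all_algebra.
From mathcomp Require Import mpoly.
Set Implicit Arguments.
Unset Strict Implicit.
Unset Printing Implicit Defensive.
Import Order.TTheory GRing.Theory Num.Theory.
Local Open Scope ring_scope.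

(* Coordinates: V = C^n with the basis Sigma^vee = standard basis (row vectors).
   Lambda_+ = N^n, Gamma^vee = Z^n, Sigma = coordinate forms, Gamma = Z^n.
   Points of V are rows; W acts on V on the right: z |-> z *m w.
   Linear forms on V are columns a, a(z) = z *m a; W acts on forms by
   w . a = w^{-1} *m a, so W-orbits of forms are { w *m a | w in W }. *)

Definition Lam (n : nat) := {ffun 'I_n -> nat}.

Section Setting.
Variable C : numClosedFieldType.
Variable n : nat.
Variable ws : seq 'M[int]_n.
Variable l : 'I_n -> nat.           (* ell(eta_i) for the basis Sigma^vee *)
Variable Delta : seq 'cV[int]_n.
Variable rho : 'I_n -> C.           (* coordinates of rho in the basis Sigma^vee *)
Variable p : Lam n -> {mpoly C[n]}.

Definition ecol (i : 'I_n) : 'cV[int]_n := delta_mx i 0.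
Definition lcol : 'cV[int]_n := \col_i (l i)%:Z.

Definition is_reflection (s : 'M[int]_n) : Prop :=
  s *m s = 1%:M /\ \rank (map_mx (fun x : int => (x%:~R : C)) (s - 1%:M)) = 1%N.

Definition finite_reflection_group : Prop :=
  [/\ uniq ws, (1%:M \in ws),
      {in ws &, forall w1 w2, w1 *m w2 \in ws},
      {in ws, forall w, exists2 w', w' \in ws & w *m w' = 1%:M} &
      {in ws, forall w, exists rs : seq 'M[int]_n,
          (forall r, r \in rs -> r \in ws /\ is_reflection r) /\
          w = foldr mulmx 1%:M rs}].

Definition ell_invariant : Prop := forall w, w \in ws -> w *m lcol = lcol.

Definition primitive (a : 'cV[int]_n) : bool :=
  (\big[gcdn/0%N]_i absz (a i ord0) == 1%N).

Definition Delta_spec : Prop :=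
  uniq Delta /\
  forall a : 'cV[int]_n, a \in Delta <->
    (primitive a /\ exists2 s, s \in ws & is_reflection s /\ s *m a = - a).

Definition Delta_plus : seq 'cV[int]_n := [seq a <- Delta | [forall i, (0 <= (a : 'cV[int]_n) i ord0)%R]].

Definition Phi : seq 'cV[int]_n := undup [seq col j w | w <- ws, j <- enum 'I_n].

Definition Lam1 : seq 'rV[int]_n :=
  undup [seq row i w | w <- ws, i <- [seq i <- enum 'I_n | l i == 1%N]].

Definition in_V0 : Prop :=
  forall i j : 'I_n, (exists2 w, w \in ws & (col j w == ecol i) || (col j w == - ecol i)) ->
    rho i = rho j.

Definition formC (a : 'cV[int]_n) (z : 'I_n -> C) : C := \sum_i (a i ord0)%:~R * z i.
Definition pair (t : 'rV[int]_n) (a : 'cV[int]_n) : int := \sum_i t ord0 i * a i ord0.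

Definition nonintegral : Prop :=
  forall a, a \in Delta_plus -> forall k : int, formC a rho != k%:~R.

(* k_omega := omega_1(rho), omega_1 in (+- W omega) cap Sigma *)
Definition kval (om : 'cV[int]_n) : C :=
  match [pick j : 'I_n | has (fun w => (w *m om == ecol j) || (w *m om == - ecol j)) ws] with
  | Some j => rho j
  | None => 0
  end.

Definition falling (x : C) (d : int) : C :=
  match d with Posz m => \prod_(i < m) (x - i%:R) | Negz _ => 1 end.

Definition f_tau (t : 'rV[int]_n) (z : 'I_n -> C) : C :=
  (\prod_(om <- Phi) falling (formC om z - kval om) (pair t om)) /
  (\prod_(a <- Delta) falling (formC a z) (pair t a)).

Definition ptC (la : Lam n) : 'I_n -> C := fun i => rho i + (la i)%:R.
Definition lev (la : Lam n) : nat := \sum_i la i * l i.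

Definition fn := Lam n -> C.          (* C(rho + Lambda_+) *)
Definition op := fn -> fn.

Definition W_invariant (q : {mpoly C[n]}) : Prop :=
  forall w, w \in ws -> forall z : 'I_n -> C,
    q.@[z] = q.@[fun j => \sum_i z i * (w i j)%:~R].

Definition shiftm (la : Lam n) (eta : 'rV[int]_n) : option (Lam n) :=
  if [forall i, 0 <= (la i)%:Z - eta ord0 i]
  then Some [ffun i => absz ((la i)%:Z - eta ord0 i)] else None.

Definition Lop : op := fun h la =>
  \sum_(eta <- Lam1) f_tau eta (ptC la) *
     (match shiftm la eta with Some mu => h mu | None => 0 end).

Definition mop (q : {mpoly C[n]}) : op := fun h la => q.@[ptC la] * h la.

Definition adL (X : op) : op := fun h la => Lop (X h) la - X (Lop h) la.

Definition Dop (q : {mpoly C[n]}) : op := fun h la =>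
  \sum_(k < (msize q).+1) (k`!%:R)^-1 * iter k adL (mop q) h la.

Definition pfun (la : Lam n) : fn := fun mu => (p la).@[ptC mu].

(* h^ (mu) = sum_tau (-1)^{ell tau} p_tau(rho+mu) h(rho+tau); only tau with
   ell(tau) <= ell(mu) contribute, and these have all coordinates <= ell(mu). *)
Definition hatf (h : fn) : fn := fun mu =>
  \sum_(t : {ffun 'I_n -> 'I_(lev mu).+1} |
          (lev [ffun i => nat_of_ord (t i)] <= lev mu)%N)
     (-1) ^+ lev [ffun i => nat_of_ord (t i)] *
     pfun [ffun i => nat_of_ord (t i)] mu * h [ffun i => nat_of_ord (t i)].

Definition hatop (X : op) : op := fun h => hatf (X (hatf h)).

Inductive inA : op -> Prop :=
| inA_m q : W_invariant q -> inA (mop q)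
| inA_L : inA Lop
| inA_id : inA (fun h => h)
| inA_add X Y : inA X -> inA Y -> inA (fun h la => X h la + Y h la)
| inA_scale (c : C) X : inA X -> inA (fun h la => c * X h la)
| inA_comp X Y : inA X -> inA Y -> inA (fun h => X (Y h)).

Definition knop_setting : Prop :=
  [/\ finite_reflection_group, ell_invariant, Delta_spec &
      (forall i, (0 < l i)%N)].

Definition interpolation_basis : Prop :=
  [/\ (forall la, W_invariant (p la) /\ (msize (p la) <= (lev la).+1)%N /\
          forall mu, (lev mu <= lev la)%N -> (p la).@[ptC mu] = (la == mu)%:R),
      (forall la q, W_invariant q -> (msize q <= (lev la).+1)%N ->
          (forall mu, (lev mu <= lev la)%N -> q.@[ptC mu] = (la == mu)%:R) -> q = p la),
      (forall q, W_invariant q -> exists (s : seq (Lam n)) (c : Lam n -> C),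
          q = \sum_(la <- s) c la *: p la) &
      (forall (s : seq (Lam n)) (c : Lam n -> C), uniq s ->
          \sum_(la <- s) c la *: p la = 0 -> forall la, la \in s -> c la = 0)].

Definition known_facts : Prop :=
  [/\ (forall la eta, eta \in Lam1 -> shiftm la eta = None -> f_tau eta (ptC la) = 0),
      (forall q, W_invariant q -> forall k, (msize q <= k)%N ->
          iter k adL (mop q) = fun _ _ => 0) &
      (forall q, W_invariant q -> forall la,
          Dop q (pfun la) = fun mu => q.@[ptC la] * pfun la mu)].

End Setting.

(* Main.v *)
Require Import Defs.
From HB Require Import structures.
From mathcomp Require Import all_boot all_order all_algebra.
From mathcomp Require Import mpoly.
From mathcomp Require Import ring.
From Stdlib Require Import FunctionalExtensionality.
Set Implicit Arguments.
Unset Strict Implicit.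
Unset Printing Implicit Defensive.
Import GRing.Theory Num.Theory.
Local Open Scope ring_scope.

Section Main.
Variable C : numClosedFieldType.
Variable n : nat.
Variable ws : seq 'M[int]_n.
Variable l : 'I_n -> nat.
Variable Delta : seq 'cV[int]_n.
Variable rho : 'I_n -> C.
Variable p : Lam n -> {mpoly C[n]}.
Hypothesis lpos : forall i, (0 < l i)%N.
Hypothesis ellinv : ell_invariant ws l.
Hypothesis IB : interpolation_basis ws l rho p.
Hypothesis KF : known_facts ws l Delta rho p.

Local Notation L := (Lop ws l Delta rho).
Local Notation lv := (lev l).
Local Notation pf := (pfun rho p).
Local Notation fn := (fn C n).
Local Notation op := (op C n).

Definition phi N (t : {ffun 'I_n -> 'I_N.+1}) : Lam n := [ffun i => nat_of_ord (t i)].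
Definition B N : seq (Lam n) := [seq x <- map (@phi N) (index_enum _) | (lv x <= N)%N].

Lemma B_uniq N : uniq (B N).
Proof.
rewrite filter_uniq // map_inj_uniq ?index_enum_uniq //.
move=> t1 t2 /ffunP h; apply/ffunP => i; apply: val_inj; have := h i; by rewrite !ffunE.
Qed.

Lemma le_lev (x : Lam n) i : (x i <= lv x)%N.
Proof.
rewrite /lev (bigD1 i) //= (leq_trans _ (leq_addr _ _)) // leq_pmulr //.
Qed.

Lemma mem_B N x : (x \in B N) = (lv x <= N)%N.
Proof.
rewrite mem_filter; case: leqP => //= h; apply/mapP.
exists [ffun i => inord (x i)]; first by rewrite mem_index_enum.
apply/ffunP => i; rewrite !ffunE inordK // ltnS (leq_trans (le_lev x i)) //.
Qed.

Definition dl (t : Lam n) : fn := fun mu => (mu == t)%:R.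

Lemma sum_delta N (g : Lam n -> C) mu : (lv mu <= N)%N ->
  \sum_(t <- B N) g t * (mu == t)%:R = g mu.
Proof.
move=> h; rewrite (bigD1_seq mu) ?mem_B ?B_uniq //= eqxx mulr1 big1 ?addr0 //.
by move=> t /negPf; rewrite eq_sym => ->; rewrite mulr0.
Qed.

Lemma sumB_le M N (F : Lam n -> C) : (M <= N)%N -> (forall x, (M < lv x)%N -> F x = 0) ->
  \sum_(x <- B N) F x = \sum_(x <- B M) F x.
Proof.
move=> hMN hF; rewrite (bigID (fun x => (lv x <= M)%N)) /= [X in _ + X]big1 ?addr0;
  last by move=> x; rewrite -ltnNge; apply: hF.
rewrite -big_filter; apply: perm_big; apply: uniq_perm; [by rewrite filter_uniq // B_uniq|exact: B_uniq|].
move=> x; rewrite mem_filter !mem_B; case h: (lv x <= M)%N => //=.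
by rewrite (leq_trans h).
Qed.

Definition rep (X : op) := forall g mu, X g mu = \sum_(t <- B (lv mu)) g t * X (dl t) mu.

Lemma rep_ext X Y : rep X -> rep Y -> (forall t, X (dl t) = Y (dl t)) -> X = Y.
Proof.
move=> hX hY h; apply: functional_extensionality => g; apply: functional_extensionality => mu.
by rewrite hX hY; apply: eq_bigr => t _; rewrite h.
Qed.

Lemma rep_high Y s t : rep Y -> (lv t < lv s)%N -> Y (dl s) t = 0.
Proof.
move=> hY hts; rewrite hY big1_seq // => u /andP[_ hu]; rewrite /dl.
case: eqP => [eus|]; last by rewrite mul0r.
by move: hu; rewrite mem_B eus leqNgt hts.
Qed.

Lemma rep_comp X Y : rep X -> rep Y -> rep (fun g => X (Y g)).
Proof.
move=> hX hY g mu /=; rewrite hX.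
transitivity (\sum_(t <- B (lv mu)) \sum_(s <- B (lv mu)) g s * Y (dl s) t * X (dl t) mu).
  rewrite [LHS]big_seq_cond [RHS]big_seq_cond; apply: eq_bigr => t /andP[ht _].
  rewrite hY mulr_suml; rewrite mem_B in ht; rewrite -(@sumB_le (lv t) (lv mu) _ ht) //.
  by move=> x hx; rewrite (rep_high hY hx) mulr0 mul0r.
rewrite exchange_big /=; apply: eq_bigr => s _; rewrite hX mulr_sumr.
by apply: eq_bigr => t _; rewrite mulrA.
Qed.

Lemma rep_add X Y : rep X -> rep Y -> rep (fun g mu => X g mu + Y g mu).
Proof. by move=> hX hY g mu; rewrite hX hY -big_split; apply: eq_bigr => t _; rewrite mulrDr. Qed.

Lemma rep_sub X Y : rep X -> rep Y -> rep (fun g mu => X g mu - Y g mu).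
Proof. by move=> hX hY g mu; rewrite hX hY -sumrB; apply: eq_bigr => t _; rewrite mulrBr. Qed.

Lemma rep_scale c X : rep X -> rep (fun g mu => c * X g mu).
Proof. by move=> hX g mu; rewrite hX mulr_sumr; apply: eq_bigr => t _; rewrite mulrCA. Qed.

Lemma rep_sum m (c : nat -> C) (X : nat -> op) : (forall k, rep (X k)) ->
  rep (fun g mu => \sum_(k < m) c k * X k g mu).
Proof.
move=> hX g mu.
transitivity (\sum_(k < m) \sum_(t <- B (lv mu)) c k * (g t * X k (dl t) mu)).
  by apply: eq_bigr => k _; rewrite hX mulr_sumr.
rewrite exchange_big /=; apply: eq_bigr => t _; rewrite mulr_sumr.
by apply: eq_bigr => k _; rewrite mulrCA.
Qed.

Lemma rep_mul (a : Lam n -> C) : rep (fun g mu => a mu * g mu).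
Proof.
move=> g mu; rewrite -[in LHS](@sum_delta (lv mu) g mu) // mulr_sumr.
by apply: eq_bigr => t _; rewrite /dl mulrCA.
Qed.

Lemma rep_id : rep (fun g => g).
Proof. by move=> g mu; rewrite sum_delta. Qed.

Lemma rep_scalar X c g : rep X -> X (fun x => c * g x) = fun mu => c * X g mu.
Proof.
move=> hX; apply: functional_extensionality => mu.
by rewrite hX [in RHS]hX mulr_sumr; apply: eq_bigr => t _; rewrite mulrA.
Qed.

Lemma rep_addf X g1 g2 : rep X -> X (fun x => g1 x + g2 x) = fun mu => X g1 mu + X g2 mu.
Proof.
move=> hX; apply: functional_extensionality => mu.
by rewrite hX [X g1 _]hX [X g2 _]hX -big_split; apply: eq_bigr => t _; rewrite mulrDl.
Qed.

Lemma L_shift la eta nu : eta \in Lam1 ws l -> shiftm la eta = Some nu -> (lv nu).+1 = lv la.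
Proof.
rewrite /Lam1 mem_undup => /allpairsP [[w i] /= [hw hi ->]].
rewrite mem_filter in hi; case/andP: hi => /eqP li _.
rewrite /shiftm; case: ifP => // /forallP H [<-].
have key : \sum_j (row i w) 0 j * (l j)%:Z = 1.
  have := ellinv hw; move/matrixP => /(_ i 0); rewrite !mxE => E.
  transitivity ((l i)%:Z); last by rewrite li.
  rewrite -E; apply: eq_bigr => j _; by rewrite !mxE.
suff: ((lv [ffun i0 => `|(la i0)%:Z - row i w ord0 i0|%N]).+1 : int) = (lv la : int) by case.
have hl : forall x : Lam n, (lv x : int) = \sum_j (x j : int) * (l j : int).
  by move=> x; rewrite /lev (big_morph Posz PoszD (erefl _)); apply: eq_bigr => j _; rewrite PoszM.
rewrite -addn1 PoszD hl.
rewrite (eq_bigr (fun j => ((la j : int) - row i w ord0 j) * (l j : int))); last first.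
  by move=> j _; rewrite ffunE gez0_abs //; apply: H.
under eq_bigr do rewrite mulrBl.
by rewrite sumrB key -hl subrK.
Qed.

Lemma L_level (g g' : fn) la : (forall nu, (lv nu).+1 = lv la -> g nu = g' nu) -> L g la = L g' la.
Proof.
move=> h; rewrite /Lop; apply: eq_big_seq => eta he.
by case E: (shiftm la eta) => [nu|] //; rewrite h // (L_shift he E).
Qed.

Lemma rep_L : rep L.
Proof.
move=> g la; rewrite /Lop /dl.
under [RHS]eq_bigr do rewrite mulr_sumr.
rewrite exchange_big /= big_seq [RHS]big_seq; apply: eq_bigr => eta he.
case E: (shiftm la eta) => [nu|]; last by rewrite mulr0 big1 // => t _; rewrite !mulr0.
rewrite -[in LHS](@sum_delta (lv la) g nu); last by rewrite -(L_shift he E).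
by rewrite mulr_sumr; apply: eq_bigr => t _; rewrite mulrCA.
Qed.

Lemma comm_ML g la : (lv la)%:R * L g la = L g la + L (fun mu => (lv mu)%:R * g mu) la.
Proof.
rewrite /Lop mulr_sumr -big_split /=; apply: eq_big_seq => eta he.
case E: (shiftm la eta) => [nu|]; last by rewrite !mulr0 addr0.
by rewrite -(L_shift he E) -addn1 natrD mulrDl mul1r addrC mulrCA.
Qed.

Definition Sg (g : fn) : fn := fun mu => (-1) ^+ lv mu * g mu.

Lemma SL g : Sg (L g) = fun mu => - L (Sg g) mu.
Proof.
apply: functional_extensionality => la; rewrite /Sg /Lop mulr_sumr -sumrN.
apply: eq_big_seq => eta he; case E: (shiftm la eta) => [nu|]; last by rewrite !mulr0 oppr0.
by rewrite -(L_shift he E) exprS mulN1r mulNr mulrCA.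
Qed.

Lemma rep_S : rep Sg.
Proof. exact: rep_mul. Qed.

Definition Pg (g : fn) : fn := fun mu => \sum_(x <- B (lv mu)) pf x mu * g x.

Lemma pf_low t mu : (lv mu <= lv t)%N -> pf t mu = (t == mu)%:R.
Proof. case: IB => H1 _ _ _; case: (H1 t) => _ [_ H]; exact: H. Qed.

Lemma pf_lt t mu : (lv mu < lv t)%N -> pf t mu = 0.
Proof.
move=> h; rewrite pf_low ?(ltnW h) //.
have : t != mu by apply/eqP => e; move: h; rewrite e ltnn.
by move/negPf => ->.
Qed.

Lemma P_dl t : Pg (dl t) = pf t.
Proof.
apply: functional_extensionality => mu; rewrite /Pg /dl.
case: (leqP (lv t) (lv mu)) => h.
  rewrite (eq_bigr (fun x => pf x mu * (t == x)%:R)) ?sum_delta // => x _.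
  by rewrite eq_sym.
rewrite pf_lt // big1_seq // => x /andP[_ hx]; rewrite mem_B in hx.
case: eqP => [e|]; last by rewrite mulr0.
by move: h; rewrite -e ltnNge hx.
Qed.

Lemma rep_P : rep Pg.
Proof. by move=> g mu; rewrite {1}/Pg; apply: eq_bigr => x _; rewrite P_dl mulrC. Qed.

Lemma P_diag g mu : (forall x, (lv x < lv mu)%N -> g x = 0) -> Pg g mu = g mu.
Proof.
move=> h; rewrite /Pg -[RHS](@sum_delta (lv mu) g mu) //; apply: eq_big_seq => x hx.
case: (ltnP (lv x) (lv mu)) => hl; first by rewrite h // mulr0 mul0r.
by rewrite pf_low // mulrC eq_sym.
Qed.

Lemma hatfE g : hatf l rho p g = Pg (Sg g).
Proof.
apply: functional_extensionality => mu; rewrite /hatf /Pg /B big_filter big_map.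
by apply: eq_bigr => t _; rewrite /Sg /phi [RHS]mulrCA mulrA.
Qed.

Definition ql : {mpoly C[n]} := \sum_i (l i)%:R *: 'X_i - (\sum_i (l i)%:R * rho i)%:MP.

Lemma ql_eval z : ql.@[z] = \sum_i (l i)%:R * z i - \sum_i (l i)%:R * rho i.
Proof.
rewrite mevalB mevalC (big_morph (meval z) (@mevalD _ _ z) (meval0 z)).
congr (_ - _); apply: eq_bigr => i _.
by rewrite mevalZ mevalXU.
Qed.

Lemma ql_pt mu : ql.@[ptC rho mu] = (lv mu)%:R.
Proof.
rewrite ql_eval /ptC; under eq_bigr do rewrite mulrDr.
rewrite big_split /= addrAC subrr add0r /lev natr_sum; apply: eq_bigr => i _.
by rewrite natrM mulrC.
Qed.

Lemma ql_inv : W_invariant ws ql.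
Proof.
move=> w hw z; rewrite !ql_eval; congr (_ - _).
rewrite [RHS](eq_bigr (fun j => \sum_i (l j)%:R * (z i * (w i j)%:~R))); last first.
  by move=> j _ /=; rewrite mulr_sumr.
rewrite [RHS]exchange_big /=; apply: eq_bigr => i _.
have := ellinv hw; move/matrixP => /(_ i 0); rewrite !mxE => E.
transitivity (((l i)%:Z)%:~R * z i); first by [].
rewrite -E (big_morph (fun x : int => x%:~R : C) (@intrD _) (erefl _)) mulr_suml.
apply: eq_bigr => j _; rewrite mxE intrM.
by rewrite [_ * ((l j)%:Z)%:~R]mulrC mulrAC -mulrA.
Qed.

Local Notation AD := (adL ws l Delta rho).

Lemma L0 la : L (fun _ => 0) la = 0.
Proof. by rewrite /Lop big1 // => eta _; case: shiftm => *; rewrite mulr0. Qed.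

Lemma adL0 : AD (fun _ _ => 0) = fun _ _ => 0.
Proof.
apply: functional_extensionality => h; apply: functional_extensionality => la.
by rewrite /adL L0 subrr.
Qed.

Lemma adL_mql : AD (mop rho ql) = fun h la => - L h la.
Proof.
apply: functional_extensionality => h; apply: functional_extensionality => la.
rewrite /adL /mop.
have -> : (fun mu => ql.@[ptC rho mu] * h mu) = (fun mu => (lv mu)%:R * h mu).
  by apply: functional_extensionality => mu; rewrite ql_pt.
by rewrite ql_pt comm_ML opprD addrCA subrr addr0.
Qed.

Lemma adL_L : AD (fun h la => - L h la) = fun _ _ => 0.
Proof.
apply: functional_extensionality => h; apply: functional_extensionality => la.
rewrite /adL.
have -> : (fun mu => - L h mu) = (fun mu => -1 * L h mu).
  by apply: functional_extensionality => mu; rewrite mulN1r.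
by rewrite (@rep_scalar L (-1) (L h) rep_L) mulN1r opprK addNr.
Qed.

Lemma iter_ql k : iter k.+2 AD (mop rho ql) = fun _ _ => 0.
Proof.
elim: k => [|k IH]; last by rewrite iterS IH adL0.
change (AD (AD (mop rho ql)) = fun _ _ => 0).
by rewrite adL_mql adL_L.
Qed.

Lemma Dop_ql : Dop ws l Delta rho ql = fun h mu => (lv mu)%:R * h mu - L h mu.
Proof.
apply: functional_extensionality => h; apply: functional_extensionality => mu.
rewrite /Dop.
have h2 := iter_ql; have h1 := adL_mql.
have h0 : forall h mu, mop rho ql h mu = (lv mu)%:R * h mu by move=> *; rewrite /mop ql_pt.
have hKF : (msize ql <= 1)%N -> AD (mop rho ql) = (fun _ _ => 0).
  by case: KF => _ H2 _ hm; exact: (H2 ql ql_inv 1%N hm).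
move: (mop rho ql) h0 h1 h2 hKF => X h0 h1 h2 hKF.
rewrite big_ord_recl [X in X + _]/= fact0 invr1 mul1r h0.
case hm: (msize ql) => [|m].
  rewrite big_ord0 addr0.
  have := congr1 (fun f => f h mu) (hKF ltac:(by rewrite hm)); rewrite h1 => /eqP.
  by rewrite oppr_eq0 => /eqP ->; rewrite subr0.
rewrite big_ord_recl big1 ?addr0; last by move=> i _; rewrite !lift0 h2 mulr0.
rewrite lift0.
change ((lv mu)%:R * h mu + (1`!%:R)^-1 * AD X h mu = (lv mu)%:R * h mu - L h mu).
by rewrite h1 invr1 mul1r.
Qed.

Lemma eig t mu : (lv mu)%:R * pf t mu - L (pf t) mu = (lv t)%:R * pf t mu.
Proof.
case: KF => _ _ H3; have := H3 ql ql_inv t; rewrite Dop_ql.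
by move=> /(congr1 (fun f => f mu)) /=; rewrite ql_pt.
Qed.

Definition Mg (g : fn) : fn := fun mu => (lv mu)%:R * g mu.
Definition D1 (g : fn) : fn := fun mu => (lv mu)%:R * g mu - L g mu.

Lemma rep_M : rep Mg.
Proof. exact: rep_mul. Qed.

Lemma rep_D1 : rep D1.
Proof. exact: (rep_sub (rep_mul (fun mu => (lv mu)%:R)) rep_L). Qed.

Lemma M_dl t : (fun x => (lv x)%:R * dl t x) = fun x => (lv t)%:R * dl t x.
Proof.
apply: functional_extensionality => x; rewrite /dl.
by case: eqP => [->|]; rewrite ?mulr0.
Qed.

Lemma PM : (fun g => D1 (Pg g)) = (fun g => Pg (Mg g)).
Proof.
apply: rep_ext; [exact: rep_comp rep_D1 rep_P|exact: rep_comp rep_P rep_M|].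
move=> t /=; rewrite /Mg M_dl (@rep_scalar Pg _ _ rep_P) P_dl.
by apply: functional_extensionality => mu; rewrite /D1 eig.
Qed.

Lemma U (x y : fn) (k : nat) : (forall mu, D1 x mu = k%:R * x mu) ->
  (forall mu, D1 y mu = k%:R * y mu) -> (forall mu, lv mu = k -> x mu = y mu) -> x = y.
Proof.
move=> hx hy hk; apply: functional_extensionality => mu.
suff H : forall N nu, (lv nu < N)%N -> x nu = y nu by apply: (H (lv mu).+1).
elim=> [//|N IH] nu hnu.
case: (eqVneq (lv nu) k) => [/hk //|hne].
have e1 := hx nu; have e2 := hy nu; rewrite /D1 in e1 e2.
have eL : L x nu = L y nu.
  by apply: L_level => z hz; apply: IH; move: hnu; rewrite -hz ltnS.
have fx : ((lv nu)%:R - k%:R) * x nu = L x nu.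
  by rewrite mulrBl -e1 opprB addrCA subrr addr0.
have fy : ((lv nu)%:R - k%:R) * y nu = L y nu.
  by rewrite mulrBl -e2 opprB addrCA subrr addr0.
have hnz : ((lv nu)%:R - k%:R : C) != 0 by rewrite subr_eq0 eqr_nat.
by apply: (mulfI hnz); rewrite fx fy eL.
Qed.

Lemma LP : (fun g => L (Pg g)) = (fun g => Pg (L g)).
Proof.
apply: rep_ext; [exact: rep_comp rep_L rep_P|exact: rep_comp rep_P rep_L|].
move=> t /=; rewrite P_dl.
have hM : (fun x => (lv x)%:R * L (dl t) x) = fun x => (lv t).+1%:R * L (dl t) x.
  apply: functional_extensionality => x; rewrite comm_ML M_dl (@rep_scalar L _ _ rep_L).
  by rewrite -addn1 natrD mulrDl mul1r addrC.
apply: (@U _ _ (lv t).+1).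
- move=> mu; rewrite /D1 comm_ML.
  have hD : (fun x => (lv x)%:R * pf t x) = fun x => (lv t)%:R * pf t x + L (pf t) x.
    by apply: functional_extensionality => x; rewrite -eig subrK.
  rewrite hD (@rep_addf L _ _ rep_L) /= (@rep_scalar L _ _ rep_L).
  by rewrite addrA addrK -addn1 natrD mulrDl mul1r addrC.
- move=> mu; have := congr1 (fun F => F (L (dl t)) mu) PM => /= ->.
  by rewrite /Mg hM (@rep_scalar Pg _ _ rep_P).
- move=> mu hmu; rewrite P_diag; last first.
    move=> x hx; rewrite (@L_level _ (fun _ => 0)) ?L0 // => z hz; rewrite /dl.
    case: eqP => // e; exfalso; move: hx; rewrite -hz hmu e ltnn //.
  apply: L_level => z hz; rewrite pf_low /dl; first by rewrite eq_sym.
  by move: hz; rewrite hmu => -[->].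
Qed.

Lemma rep_G : rep (fun g => Pg (Sg (Pg (Sg g)))).
Proof. exact: rep_comp rep_P (rep_comp rep_S (rep_comp rep_P rep_S)). Qed.

Lemma S_dl t : Sg (dl t) = fun x => (-1) ^+ lv t * dl t x.
Proof.
apply: functional_extensionality => x; rewrite /Sg /dl.
by case: eqP => [->|]; rewrite ?mulr0.
Qed.

Lemma GM g : Pg (Sg (Pg (Sg (Mg g)))) = Mg (Pg (Sg (Pg (Sg g)))).
Proof.
have e1 : Sg (Mg g) = Mg (Sg g).
  by apply: functional_extensionality => x; rewrite /Sg /Mg mulrCA.
rewrite e1; have e2 := congr1 (fun F => F (Sg g)) PM; simpl in e2; rewrite -e2.
set h := Pg (Sg g).
have e3 : Sg (D1 h) = fun mu => Mg (Sg h) mu + L (Sg h) mu.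
  apply: functional_extensionality => mu.
  have := congr1 (fun F => F mu) (SL h); rewrite /Sg /D1 /Mg /= => E.
  by rewrite mulrBr E opprK mulrCA.
rewrite e3 (@rep_addf Pg _ _ rep_P).
apply: functional_extensionality => mu.
have := congr1 (fun F => F (Sg h) mu) PM; have := congr1 (fun F => F (Sg h) mu) LP.
rewrite /= => <- <-; rewrite /D1 /Mg.
by rewrite subrK.
Qed.

Lemma invol : (fun g => Pg (Sg (Pg (Sg g)))) = (fun g => g).
Proof.
apply: rep_ext; [exact: rep_G|exact: rep_id|].
move=> t /=; apply: functional_extensionality => mu.
case: (eqVneq (lv mu) (lv t)) => e.
  rewrite S_dl (@rep_scalar Pg _ _ rep_P) P_dl P_diag; last first.
    by move=> x hx; rewrite /Sg pf_lt ?mulr0 // -e.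
  rewrite /Sg pf_low ?e // /dl eq_sym.
  case: (mu == t); last by rewrite !mulr0.
  by rewrite mulrA -exprMn mulrNN mul1r expr1n mul1r.
have hM := congr1 (fun F => F mu) (GM (dl t)).
rewrite /Mg M_dl (@rep_scalar _ _ _ rep_G) /= in hM.
have hz : (lv mu)%:R - (lv t)%:R != 0 :> C by rewrite subr_eq0 eqr_nat.
have : ((lv mu)%:R - (lv t)%:R) * Pg (Sg (Pg (Sg (dl t)))) mu = 0.
  by rewrite mulrBl hM subrr.
move/eqP; rewrite mulf_eq0 (negPf hz) /= => /eqP ->.
rewrite /dl; case: eqP => // em; by move: e; rewrite em eqxx.
Qed.

Lemma hatfP : hatf l rho p = fun g => Pg (Sg g).
Proof. by apply: functional_extensionality => g; rewrite hatfE. Qed.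

Lemma hatf_invol g : hatf l rho p (hatf l rho p g) = g.
Proof. by rewrite hatfP; have := congr1 (fun F => F g) invol. Qed.

Lemma rep_hatf : rep (hatf l rho p).
Proof. rewrite hatfP; exact: rep_comp rep_P rep_S. Qed.

Lemma rep_iter X k : rep X -> rep (iter k AD X).
Proof.
move=> hX; elim: k => [//|k IH]; rewrite iterS.
exact: (rep_sub (rep_comp rep_L IH) (rep_comp IH rep_L)).
Qed.

Lemma rep_Dop q : rep (Dop ws l Delta rho q).
Proof.
have hX : forall k, rep (iter k AD (mop rho q)) :=
  fun k => @rep_iter (mop rho q) k (rep_mul (fun mu => q.@[ptC rho mu])).
exact: (@rep_sum (msize q).+1 (fun k => (k`!%:R)^-1) (fun k => iter k AD (mop rho q)) hX).
Qed.

Lemma part1 q : W_invariant ws q -> hatop l rho p (mop rho q) = Dop ws l Delta rho q.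
Proof.
move=> hq.
have DH : (fun g => Dop ws l Delta rho q (hatf l rho p g)) = (fun g => hatf l rho p (mop rho q g)).
  apply: rep_ext; [exact: rep_comp (rep_Dop q) rep_hatf|exact: rep_comp rep_hatf (rep_mul _)|].
  move=> t /=; rewrite hatfP S_dl (@rep_scalar Pg _ _ rep_P) P_dl.
  rewrite (@rep_scalar _ _ _ (rep_Dop q)).
  case: KF => _ _ H3; rewrite H3 //.
  have -> : mop rho q (dl t) = fun x => (q.@[ptC rho t]) * dl t x.
    by apply: functional_extensionality => x; rewrite /mop /dl; case: eqP => [->|]; rewrite ?mulr0.
  have -> : Sg (fun x => q.@[ptC rho t] * dl t x) = fun x => q.@[ptC rho t] * Sg (dl t) x.
    by apply: functional_extensionality => x; rewrite /Sg mulrCA.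
  rewrite (@rep_scalar Pg _ _ rep_P) S_dl (@rep_scalar Pg _ _ rep_P) P_dl.
  by apply: functional_extensionality => x; rewrite mulrCA.
apply: functional_extensionality => h; rewrite /hatop.
have := congr1 (fun F => F (hatf l rho p h)) DH; rewrite /= hatf_invol => <-.
by [].
Qed.

Lemma part2 : hatop l rho p L = (fun h la => - L h la).
Proof.
apply: functional_extensionality => h; rewrite /hatop hatfP SL.
have -> : (fun mu => - L (Sg (Pg (Sg h))) mu) = (fun mu => -1 * L (Sg (Pg (Sg h))) mu).
  by apply: functional_extensionality => mu; rewrite mulN1r.
rewrite (@rep_scalar Pg _ _ rep_P).
have := congr1 (fun F => F (Sg (Pg (Sg h)))) LP; rewrite /= => <-.
have := congr1 (fun F => F h) invol; rewrite /= => ->.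
by apply: functional_extensionality => mu; rewrite mulN1r.
Qed.

Lemma hatf_add a b : hatf l rho p (fun x => a x + b x) = fun mu => hatf l rho p a mu + hatf l rho p b mu.
Proof. exact: rep_addf rep_hatf. Qed.

Lemma hatf_scale c a : hatf l rho p (fun x => c * a x) = fun mu => c * hatf l rho p a mu.
Proof. exact: rep_scalar rep_hatf. Qed.

Local Notation IA := (inA ws l Delta rho).

Lemma inA_sum m (c : nat -> C) (X : nat -> op) : (forall k, IA (X k)) ->
  IA (fun g mu => \sum_(k < m) c k * X k g mu).
Proof.
move=> hX; elim: m => [|m IH].
  have -> : (fun (g : fn) (mu : Lam n) => \sum_(k < 0) c k * X k g mu) = (fun g mu => 0 * g mu).
    by apply: functional_extensionality => g; apply: functional_extensionality => mu; rewrite big_ord0 mul0r.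
  exact: (inA_scale 0 (inA_id _ _ _ _)).
have -> : (fun (g : fn) (mu : Lam n) => \sum_(k < m.+1) c k * X k g mu)
   = (fun g mu => (fun g mu => \sum_(k < m) c k * X k g mu) g mu + (fun g mu => c m * X m g mu) g mu).
  by apply: functional_extensionality => g; apply: functional_extensionality => mu; rewrite big_ord_recr.
exact: (inA_add IH (inA_scale (c m) (hX m))).
Qed.

Lemma inA_iter X k : IA X -> IA (iter k AD X).
Proof.
move=> hX; elim: k => [//|k IH]; rewrite iterS.
have -> : AD (iter k AD X) = (fun h la => (fun h => L (iter k AD X h)) h la
            + -1 * (fun h => iter k AD X (L h)) h la).
  by apply: functional_extensionality => h; apply: functional_extensionality => la; rewrite /adL mulN1r.
exact: (inA_add (inA_comp (inA_L _ _ _ _) IH) (inA_scale (-1) (inA_comp IH (inA_L _ _ _ _)))).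
Qed.

Lemma inA_Dop q : W_invariant ws q -> IA (Dop ws l Delta rho q).
Proof.
move=> hq.
have hX : forall k, IA (iter k AD (mop rho q)) :=
  fun k => @inA_iter (mop rho q) k (inA_m _ _ _ hq).
exact: (@inA_sum (msize q).+1 (fun k => (k`!%:R)^-1) (fun k => iter k AD (mop rho q)) hX).
Qed.

Lemma hatop_invol X : hatop l rho p (hatop l rho p X) = X.
Proof.
apply: functional_extensionality => h; rewrite /hatop !hatf_invol; by [].
Qed.

Lemma hatop_comp X Y : hatop l rho p (fun h => X (Y h))
   = (fun h => hatop l rho p X (hatop l rho p Y h)).
Proof.
apply: functional_extensionality => h; rewrite /hatop hatf_invol; by [].
Qed.

Lemma hatop_add X Y : hatop l rho p (fun h la => X h la + Y h la)
   = (fun h la => hatop l rho p X h la + hatop l rho p Y h la).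
Proof. by apply: functional_extensionality => h; rewrite /hatop hatf_add. Qed.

Lemma hatop_scale c X : hatop l rho p (fun h la => c * X h la)
   = (fun h la => c * hatop l rho p X h la).
Proof. by apply: functional_extensionality => h; rewrite /hatop hatf_scale. Qed.

Lemma hatop_id : hatop l rho p (fun h => h) = (fun h => h).
Proof. by apply: functional_extensionality => h; rewrite /hatop hatf_invol. Qed.

Lemma main_sec :
  [/\ (forall q, W_invariant ws q -> hatop l rho p (mop rho q) = Dop ws l Delta rho q),
      hatop l rho p L = (fun h la => - L h la),
      (forall X, IA X -> IA (hatop l rho p X) /\ hatop l rho p (hatop l rho p X) = X),
      (forall X Y, IA X -> IA Y ->
          [/\ hatop l rho p (fun h => X (Y h)) = (fun h => hatop l rho p X (hatop l rho p Y h)),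
              hatop l rho p (fun h la => X h la + Y h la)
                = (fun h la => hatop l rho p X h la + hatop l rho p Y h la) &
              forall c : C, hatop l rho p (fun h la => c * X h la)
                = (fun h la => c * hatop l rho p X h la)]) &
      hatop l rho p (fun h => h) = (fun h => h)].
Proof.
split.
- exact: part1.
- exact: part2.
- move=> X hX; split; last exact: hatop_invol.
  elim: hX.
  + move=> q hq; rewrite part1 //; exact: inA_Dop.
  + rewrite part2.
    have -> : (fun h la => - L h la) = (fun h la => -1 * L h la).
      by apply: functional_extensionality => h; apply: functional_extensionality => la; rewrite mulN1r.
    exact: (inA_scale (-1) (inA_L _ _ _ _)).
  + rewrite hatop_id; exact: inA_id.
  + move=> X0 Y0 _ h1 _ h2; rewrite hatop_add; exact: inA_add.
  + move=> c X0 _ h1; rewrite hatop_scale; exact: inA_scale.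
  + move=> X0 Y0 _ h1 _ h2; rewrite hatop_comp; exact: inA_comp.
- move=> X Y _ _; split; [exact: hatop_comp|exact: hatop_add|move=> c; exact: hatop_scale].
- exact: hatop_id.
Qed.

End Main.

Theorem theorem5p3 (C : numClosedFieldType) (n : nat) (ws : seq 'M[int]_n)
  (l : 'I_n -> nat) (Delta : seq 'cV[int]_n) (rho : 'I_n -> C)
  (p : Lam n -> {mpoly C[n]}) :
  knop_setting C ws l Delta ->
  in_V0 ws rho ->
  nonintegral Delta rho ->
  interpolation_basis ws l rho p ->
  known_facts ws l Delta rho p ->
  [/\ (forall q, W_invariant ws q -> hatop l rho p (mop rho q) = Dop ws l Delta rho q),
      hatop l rho p (Lop ws l Delta rho) = (fun h la => - Lop ws l Delta rho h la),
      (forall X, inA ws l Delta rho X ->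
          inA ws l Delta rho (hatop l rho p X) /\ hatop l rho p (hatop l rho p X) = X),
      (forall X Y, inA ws l Delta rho X -> inA ws l Delta rho Y ->
          [/\ hatop l rho p (fun h => X (Y h)) = (fun h => hatop l rho p X (hatop l rho p Y h)),
              hatop l rho p (fun h la => X h la + Y h la)
                = (fun h la => hatop l rho p X h la + hatop l rho p Y h la) &
              forall c : C, hatop l rho p (fun h la => c * X h la)
                = (fun h la => c * hatop l rho p X h la)]) &
      hatop l rho p (fun h => h) = (fun h => h)].
Proof.
case=> _ hell _ hl _ _ hIB hKF.
exact: (main_sec hl hell hIB hKF).
Qed.
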